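(* Let $k\ge2$, $\beta>0$, $J,B\in\mathbb{R}$, $\theta=\tanh(\beta J)$, $f_\theta(h)=\operatorname{arctanh}(\theta\tanh h)$, and let $h\in\mathbb{R}$ be a solution of $h=k f_\theta(h+\beta B)$. For the translation-invariant boundary condition $h_x=h$ for all $x\in V$, the free energy $F(h)=-\lim_{n\to\infty}\frac{1}{\beta|V_n|}\ln Z_n(h)$ exists and $$F(h)=-\frac{1}{2\beta}\ln\big[4\cosh(h+\beta(B+J))\cosh(h+\beta(B-J))\big].$$
   Context: $\Gamma^k=(V,L)$ is the Cayley tree in which every vertex has $k+1$ neighbours; $x^0\in V$ is a fixed root, $d$ the graph distance, $V_n=\{x:d(x,x^0)\le n\}$, $W_n=\{x:d(x,x^0)=n\}$. For a boundary condition $h=\{h_x\in\mathbb{R}\}_{x\in V}$, $$Z_n(h)=\sum_{\sigma\in\{-1,1\}^{V_n}}\exp\Big\{\beta J\sum_{\langle x,y\rangle\subset V_n}\sigma(x)\sigma(y)+\beta B\sum_{x\in V_n}\sigma(x)+\sum_{x\in W_n}h_x\sigma(x)\Big\},$$ the first sum running over nearest-neighbour pairs with both endpoints in $V_n$. *)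

(* Defs.v *)
From HB Require Import structures.
From mathcomp Require Import all_boot all_order all_algebra.
From mathcomp Require Import all_classical all_reals all_analysis.
Set Implicit Arguments. Unset Strict Implicit. Unset Printing Implicit Defensive.
Import Order.TTheory GRing.Theory Num.Theory.
Local Open Scope ring_scope.

Definition cosh {R : realType} (x : R) : R := (expR x + expR (- x)) / 2.
Definition tanh {R : realType} (x : R) : R :=
  (expR x - expR (- x)) / (expR x + expR (- x)).
Definition artanh {R : realType} (x : R) : R := ln ((1 + x) / (1 - x)) / 2.

Definition f_theta {R : realType} (theta h : R) : R := artanh (theta * tanh h).

(* ---------------- The Cayley tree Gamma^k ----------------
   A vertex is the (reversed) word of the unique non-backtracking path from
   the root x^0 = [::] : the word [:: a_m; ...; a_1] denotes the vertex reached
   by first going to the a_1-th neighbour of the root (a_1 < k+1), then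
   successively to the a_2-th, ..., a_m-th child (a_i < k for i >= 2).
   The parent of a nonempty word is its [behead]; the root has k+1 neighbours,
   every other vertex has k children plus its parent, i.e. k+1 neighbours.
   d(x, x^0) = size x. *)
Fixpoint cayley_word {k : nat} (s : seq 'I_k.+1) : bool :=
  match s with
  | [::] => true
  | [:: _] => true
  | a :: t => (a < k)%N && cayley_word t
  end.

(* y is a child of x (so {x,y} is an edge; every edge is obtained exactly once) *)
Definition cayley_child (k : nat) (x y : seq 'I_k.+1) : bool :=
  (y != [::]) && (behead y == x).

Definition Vn (k n : nat) : finType := {s : n.-bseq 'I_k.+1 | @cayley_word k s}.

Definition vword {k n : nat} (x : Vn k n) : seq 'I_k.+1 := val (val x).

Definition spin {R : realType} (b : bool) : R := if b then 1 else -1.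

(* Z_n(h) : configurations sigma in {-1,1}^{V_n}, encoded by booleans via spin *)
Definition Zn {R : realType} (k : nat) (beta J B : R) (h : seq 'I_k.+1 -> R)
    (n : nat) : R :=
  \sum_(sigma : {ffun Vn k n -> bool})
    expR (beta * J * (\sum_(x : Vn k n) \sum_(y : Vn k n | cayley_child (vword x) (vword y))
                        spin (sigma x) * spin (sigma y))
          + beta * B * (\sum_(x : Vn k n) spin (sigma x))
          + \sum_(x : Vn k n | size (vword x) == n) h (vword x) * spin (sigma x)).
Arguments Zn {R} k beta J B h n.

(* Main.v *)
Require Import Defs.
From HB Require Import structures.
From mathcomp Require Import all_boot all_order all_algebra.
From mathcomp Require Import all_classical all_reals all_analysis.
From mathcomp Require Import ring lra.
Import Order.TTheory GRing.Theory Num.Theory.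
Set Implicit Arguments. Unset Strict Implicit.
Local Open Scope ring_scope.

Section Comb.
Variables (k n : nat).
Local Notation V := (Vn k n).

Lemma vword_inj : injective (@vword k n).
Proof. by move=> x y /val_inj /val_inj. Qed.

Definition mkV (w : seq 'I_k.+1) (Hs : (size w <= n)%N) (Hc : cayley_word w) : V :=
  exist (fun s : n.-bseq 'I_k.+1 => cayley_word s) (Bseq Hs) Hc.

Lemma vword_mkV w Hs Hc : vword (@mkV w Hs Hc) = w.
Proof. by []. Qed.

Lemma cw_cons (a : 'I_k.+1) w :
  cayley_word (a :: w) = (w == [::]) || ((a < k)%N && cayley_word w).
Proof. by case: w. Qed.

Lemma cw_behead w : @cayley_word k w -> cayley_word (behead w).
Proof. by case: w => [|a [|b t]] //= /andP[]. Qed.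

Lemma size_vword (x : V) : (size (vword x) <= n)%N.
Proof. exact: size_bseq. Qed.

Lemma cw_vword (x : V) : cayley_word (vword x).
Proof. exact: (valP x). Qed.

Lemma size_behead_le (x : V) : (size (behead (vword x)) <= n)%N.
Proof. by rewrite size_behead (leq_trans (leq_pred _)) ?size_vword. Qed.

Definition vroot : V := @mkV [::] (leq0n n) erefl.

Definition par (x : V) : V := @mkV _ (size_behead_le x) (cw_behead (cw_vword x)).

Lemma vword_par x : vword (par x) = behead (vword x).
Proof. by []. Qed.

Lemma vword_root : vword vroot = [::].
Proof. by []. Qed.

Lemma vword_eq0 x : (vword x == [::]) = (x == vroot).
Proof. by rewrite -vword_root (inj_eq vword_inj). Qed.

Lemma child_eq x y :
  cayley_child (vword x) (vword y) = (y != vroot) && (par y == x).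
Proof. by rewrite /cayley_child vword_eq0 -vword_par (inj_eq vword_inj). Qed.

Lemma size_par y : y != vroot -> size (vword (par y)) = (size (vword y)).-1.
Proof. by rewrite vword_par size_behead. Qed.

Lemma edge_sum (R : nmodType) (F : V -> V -> R) :
  \sum_(x : V) \sum_(y : V | cayley_child (vword x) (vword y)) F x y =
  \sum_(y : V | y != vroot) F (par y) y.
Proof.
under eq_bigr => x _ do rewrite big_mkcond /=.
rewrite exchange_big /= [RHS]big_mkcond /=; apply: eq_bigr => y _.
under eq_bigr => x _ do rewrite child_eq.
case: (y != vroot) => /=; last by rewrite big1.
rewrite -big_mkcond /= (big_pred1 (par y)) // => z; exact: eq_sym.
Qed.

Definition ch (x : V) : nat :=
  if (size (vword x) < n)%N then (if vword x == [::] then k.+1 else k) else 0%N.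

Lemma child_word x y : (y != vroot) && (par y == x) ->
  vword y = head ord0 (vword y) :: vword x.
Proof.
case/andP=> ny /eqP <-; rewrite vword_par.
move: ny; rewrite -vword_eq0; by case: (vword y).
Qed.

Lemma card_children x : #|[set y | (y != vroot) && (par y == x)]| = ch x.
Proof.
rewrite /ch; case: ltnP => hx.
- set C := [set y | _].
  have inj : {in C &, injective (fun y => head ord0 (vword y))}.
    move=> y1 y2; rewrite !inE => h1 h2 e.
    by apply: vword_inj; rewrite (child_word h1) (child_word h2) e.
  rewrite -(card_in_imset inj).
  have -> : [set head ord0 (vword y) | y in C] =
            [set a : 'I_k.+1 | (vword x == [::]) || (a < k)%N].
    apply/setP => a; rewrite inE; apply/imsetP/idP.
    + case=> y; rewrite inE => hy ->.
      have := cw_vword y; rewrite (child_word hy) cw_cons.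
      by case/orP=> [->//|/andP[-> _]]; rewrite orbT.
    + move=> ha.
      have Hs : (size (a :: vword x) <= n)%N by [].
      have Hc : cayley_word (a :: vword x).
        rewrite cw_cons; case/orP: ha => [->//|->]; by rewrite cw_vword orbT.
      exists (mkV Hs Hc) => //; rewrite inE; apply/andP; split.
        by rewrite -vword_eq0.
      by apply/eqP/vword_inj.
  case: eqP => _ /=.
  + have -> : [set a : 'I_k.+1 | true || (a < k)%N] = [set: 'I_k.+1]%SET by apply/setP => a; rewrite !inE.
    by rewrite cardsT card_ord.
  + have -> : [set a : 'I_k.+1 | (a < k)%N] = [set~ ord_max].
      apply/setP => a; rewrite !inE; apply/idP/idP.
      * by move=> ha; apply/eqP => e; move: ha; rewrite e /= ltnn.
      * move=> ha; have := ltn_ord a; rewrite ltnS leq_eqVlt; case/orP=> // /eqP e.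
        by move: ha; rewrite (_ : a = ord_max) ?eqxx //; apply/val_inj.
    by rewrite cardsC1 card_ord.
- apply/eqP; rewrite cards_eq0; apply/eqP/setP => y; rewrite !inE.
  apply/negbTE/negP => hy.
  have := size_vword y; rewrite (child_word hy) /=.
  by rewrite ltnNge hx.
Qed.

Lemma par_sum (R : nmodType) (G : V -> R) :
  \sum_(y : V | y != vroot) G (par y) = \sum_(x : V) G x *+ ch x.
Proof.
rewrite (partition_big par xpredT) //=; apply: eq_bigr => x _.
rewrite -card_children -sumr_const; apply: eq_big => [y|y /andP[_ /eqP->]] //.
by rewrite inE.
Qed.


Lemma cw_nseq (hk : (0 < k)%N) i : cayley_word (nseq i (ord0 : 'I_k.+1)).
Proof. by elim: i => // i IH; rewrite [nseq _ _]/= cw_cons IH hk orbT. Qed.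

Lemma card_V_ge (hk : (0 < k)%N) : (n.+1 <= #|V|)%N.
Proof.
have Hs (i : 'I_n.+1) : (size (nseq i (ord0 : 'I_k.+1)) <= n)%N.
  by rewrite size_nseq -ltnS ltn_ord.
pose g (i : 'I_n.+1) : V := mkV (Hs i) (cw_nseq hk i).
have inj : injective g.
  move=> i j /(congr1 (fun x => size (vword x))); rewrite !vword_mkV !size_nseq.
  exact: val_inj.
by have := leq_card g inj; rewrite card_ord.
Qed.
End Comb.

Section Tree.
Variables (R : numFieldType) (T : finType) (r : T) (par : T -> T) (depth : T -> nat).
Hypothesis hdep : forall y, y != r -> (depth (par y) < depth y)%N.
Variables (psi : bool -> bool -> R) (a : R).
Hypothesis hpsi : forall b, psi b true + psi b false = a.

Definition flip (y : T) (s : {ffun T -> bool}) : {ffun T -> bool} :=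
  [ffun z => if z == y then ~~ s z else s z].

Lemma flipK y : involutive (flip y).
Proof. by move=> s; apply/ffunP => z; rewrite !ffunE; case: eqP => // _; rewrite negbK. Qed.

Lemma flip_inj y : injective (flip y).
Proof. exact: inv_inj (flipK y). Qed.

Lemma flipE y s z : z != y -> flip y s z = s z.
Proof. by rewrite ffunE => /negbTE ->. Qed.

Lemma flip_sum y p (G : {ffun T -> bool} -> R) : p != y ->
  (forall s, G (flip y s) = G s) ->
  \sum_(s : {ffun T -> bool}) psi (s p) (s y) * G s = a / 2 * \sum_s G s.
Proof.
move=> hp hG.
set S := (X in X = _).
have e : S = \sum_(s : {ffun T -> bool}) psi (s p) (~~ s y) * G s.
  rewrite /S (reindex_inj (@flip_inj y)); apply: eq_bigr => s _.
  by rewrite hG flipE // ffunE eqxx.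
have e2 : S + S = a * \sum_s G s.
  rewrite {2}e -big_split mulr_sumr; apply: eq_bigr => s _ /=.
  by rewrite -mulrDl -(hpsi (s p)); case: (s y) => //=; rewrite addrC.
have h2 : (2:R) != 0 by rewrite pnatr_eq0.
rewrite (_ : S = (S + S) / 2); last by rewrite -mulr2n -[S *+ 2]mulr_natr mulfK.
by rewrite e2 mulrAC.
Qed.

Lemma tree_sum (g : bool -> R) (A : {set T}) : r \notin A ->
  \sum_(s : {ffun T -> bool}) (\prod_(y in A) psi (s (par y)) (s y)) * g (s r)
  = (a / 2) ^+ #|A| * \sum_(s : {ffun T -> bool}) g (s r).
Proof.
move=> hr; move hA: #|A| => m; elim: m A hA hr => [|m IH] A hA hr.
  move/eqP: hA; rewrite cards_eq0 => /eqP ->.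
  by rewrite expr0 mul1r; apply: eq_bigr => s _; rewrite big_set0 mul1r.
have [y0 y0A] : exists y0, y0 \in A.
  by apply/set0Pn; rewrite -cards_eq0 hA.
case: (@arg_maxnP _ y0 (mem A) depth y0A) => y yA0 ymax.
have yA : y \in A by exact: yA0.
have yr : y != r by apply: contraNneq hr => <-.
have hA' : #|A :\ y| = m by move: hA; rewrite (cardsD1 y) yA add1n => -[].
have hr' : r \notin A :\ y by rewrite inE negb_and hr orbT.
under eq_bigr => s _ do rewrite (big_setD1 y yA) /= -mulrA.
rewrite flip_sum.
- by rewrite IH // exprS mulrA.
- apply/eqP => e; have := hdep yr; rewrite e ltnn //.
- move=> s; congr (_ * _); last by rewrite flipE // eq_sym.
  apply: eq_bigr => z; rewrite !inE => /andP[zy zA].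
  have zr : z != r by apply: contraNneq hr => <-.
  rewrite (flipE _ zy) flipE //.
  have hz : (depth z <= depth y)%N by exact: (ymax z zA).
  by apply/eqP => e; have := hdep zr; rewrite e ltnNge hz.
Qed.

End Tree.

Section Energy.
Variables (R : realType) (k n : nat) (beta J B h f : R).
Hypothesis hk : h = k%:R * f.
Hypothesis hn : (0 < n)%N.
Local Notation V := (Vn k n).
Let H := h + beta * B.
Let K := beta * B + h + f.

Definition Lterm (b c : bool) : R := beta * J * (spin b * spin c) + H * spin c - f * spin b.

Lemma energy (s : {ffun V -> bool}) :
  beta * J * (\sum_(x : V) \sum_(y : V | cayley_child (vword x) (vword y))
                        spin (s x) * spin (s y))
          + beta * B * (\sum_(x : V) spin (s x))
          + \sum_(x : V | size (vword x) == n) h * spin (s x)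
  = \sum_(y : V | y != vroot k n) Lterm (s (par y)) (s y) + K * spin (s (vroot k n)).
Proof.
rewrite edge_sum /Lterm.
set P := \sum_(y | y != vroot k n) spin (s (par y)) * spin (s y).
have e1 : \sum_(y | y != vroot k n)
     (beta * J * (spin (s (par y)) * spin (s y)) + H * spin (s y) - f * spin (s (par y)))
   = beta * J * P + \sum_(y | y != vroot k n) H * spin (s y)
     - \sum_(x : V) (f * spin (s x)) *+ ch x.
  rewrite big_split sumrN big_split /= -mulr_sumr.
  by have := par_sum (fun x => f * spin (s x)); rewrite /= => ->.
have e2 : beta * B * (\sum_(x : V) spin (s x)) + \sum_(x : V | size (vword x) == n) h * spin (s x)
   = \sum_(y | y != vroot k n) H * spin (s y) - \sum_(x : V) (f * spin (s x)) *+ ch x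
     + K * spin (s (vroot k n)).
  rewrite mulr_sumr [\sum_(x | size (vword x) == n) _]big_mkcond /= [\sum_(y | y != vroot k n) _]big_mkcond /=.
  rewrite -(@big_pred1_eq R 0 +%R _ (vroot k n) (fun x => K * spin (s x))).
  rewrite [X in _ = _ + X]big_mkcond /= -sumrB -!big_split /=.
  apply: eq_bigr => x _.
  have hs := size_vword x.
  case: (eqVneq x (vroot k n)) => [->|xr].
    rewrite /ch vword_root /= hn eq_sym (gtn_eqF hn).
    rewrite -mulr_natr /K hk; ring.
  have hs0 : (0 < size (vword x))%N.
    by rewrite lt0n size_eq0 vword_eq0.
  rewrite /ch /= vword_eq0 (negbTE xr).
  case: ltnP => hl.
    rewrite (ltn_eqF hl) -mulr_natr /H hk; ring.
  have -> : size (vword x) == n by rewrite eqn_leq hs hl.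
  rewrite mulr0n /H; ring.
rewrite e1 -addrA e2; ring.
Qed.

End Energy.

Section Alg.
Variables (R : realType) (beta J B h : R).
Let H := h + beta * B.
Let f := f_theta (tanh (beta * J)) H.
Let u := expR (beta * J).
Let v := expR H.
Let w := expR f.

Lemma u_gt0 : 0 < u. Proof. exact: expR_gt0. Qed.
Lemma v_gt0 : 0 < v. Proof. exact: expR_gt0. Qed.
Lemma w_gt0 : 0 < w. Proof. exact: expR_gt0. Qed.

Lemma w2 : w ^+ 2 * (u ^+ 2 + v ^+ 2) = u ^+ 2 * v ^+ 2 + 1.
Proof.
have hu := u_gt0; have hv := v_gt0.
have u0 : u != 0 by rewrite gt_eqF.
have v0 : v != 0 by rewrite gt_eqF.
have uu : u + u^-1 != 0 by rewrite gt_eqF // addr_gt0 // invr_gt0.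
have vv : v + v^-1 != 0 by rewrite gt_eqF // addr_gt0 // invr_gt0.
set th := (u - u^-1) / (u + u^-1).
set t := (v - v^-1) / (v + v^-1).
have eth : tanh (beta * J) = th by rewrite /tanh expRN.
have et : tanh H = t by rewrite /tanh expRN.
have e1 : 1 - th * t = 2 * (u ^+ 2 + v ^+ 2) / ((u ^+ 2 + 1) * (v ^+ 2 + 1)).
  rewrite /th /t; field.
  have s1 : 0 < u ^+ 2 + 1 by rewrite addr_gt0 // exprn_gt0.
  have s2 : 0 < v ^+ 2 + 1 by rewrite addr_gt0 // exprn_gt0.
  by rewrite !gt_eqF.
have s3 : 0 < u ^+ 2 + v ^+ 2 by rewrite addr_gt0 // exprn_gt0.
have d1 : 1 - th * t != 0.
  rewrite e1 gt_eqF // divr_gt0 // ?mulr_gt0 // ?addr_gt0 // ?exprn_gt0 //.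
have eQ : (1 + th * t) / (1 - th * t) = (u ^+ 2 * v ^+ 2 + 1) / (u ^+ 2 + v ^+ 2).
  apply: (@mulIf _ (1 - th * t)) => //; rewrite mulfVK //.
  rewrite e1 /th /t; field.
  by rewrite !gt_eqF // addr_gt0 // exprn_gt0.
have hQ : 0 < (u ^+ 2 * v ^+ 2 + 1) / (u ^+ 2 + v ^+ 2).
  by rewrite divr_gt0 // addr_gt0 // mulr_gt0 // exprn_gt0.
have ew : w ^+ 2 = (u ^+ 2 * v ^+ 2 + 1) / (u ^+ 2 + v ^+ 2).
  rewrite /w expr2 -expRD /f /f_theta /artanh eth et eQ.
  by rewrite -mulrDl -mulr2n -[X in expR (X / _)]mulr_natr mulfK ?pnatr_eq0 // lnK.
by rewrite ew mulfVK // gt_eqF.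
Qed.


Definition psi (b c : bool) : R := expR (Lterm beta J B h f b c).

Lemma psiTT : psi true true = u * v / w.
Proof.
rewrite /psi /Lterm /spin (_ : _ + _ - _ = beta * J + H - f); last by rewrite /H; ring.
by rewrite expRB expRD.
Qed.
Lemma psiTF : psi true false = u^-1 * v^-1 / w.
Proof.
rewrite /psi /Lterm /spin (_ : _ + _ - _ = - (beta * J) + - H - f); last by rewrite /H; ring.
by rewrite expRB expRD !expRN.
Qed.
Lemma psiFT : psi false true = u^-1 * v * w.
Proof.
rewrite /psi /Lterm /spin (_ : _ + _ - _ = - (beta * J) + H + f); last by rewrite /H; ring.
by rewrite (expRD _ f) (expRD _ H) expRN.
Qed.
Lemma psiFF : psi false false = u * v^-1 * w.
Proof.
rewrite /psi /Lterm /spin (_ : _ + _ - _ = beta * J + - H + f); last by rewrite /H; ring.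
by rewrite (expRD _ f) (expRD _ (- H)) expRN.
Qed.

Definition aa : R := psi true true + psi true false.

Lemma hpsi b : psi b true + psi b false = aa.
Proof.
case: b => //; rewrite /aa psiTT psiTF psiFT psiFF.
have hu := u_gt0; have hv := v_gt0; have hw := w_gt0.
have u0 : u != 0 by rewrite gt_eqF.
have v0 : v != 0 by rewrite gt_eqF.
have w0 : w != 0 by rewrite gt_eqF.
apply/eqP; rewrite -subr_eq0; apply/eqP.
rewrite (_ : _ - _ = (w ^+ 2 * (u ^+ 2 + v ^+ 2) - (u ^+ 2 * v ^+ 2 + 1)) / (u * v * w)).
  by rewrite w2 subrr mul0r.
by field; rewrite u0 v0 w0.
Qed.

Lemma aa_gt0 : 0 < aa.
Proof. by rewrite /aa addr_gt0 // expR_gt0. Qed.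

Lemma aa_sq : aa ^+ 2 = 4 * cosh (h + beta * (B + J)) * cosh (h + beta * (B - J)).
Proof.
have hu := u_gt0; have hv := v_gt0; have hw := w_gt0.
have u0 : u != 0 by rewrite gt_eqF.
have v0 : v != 0 by rewrite gt_eqF.
have w0 : w != 0 by rewrite gt_eqF.
rewrite expr2 {2}(_ : aa = psi false true + psi false false); last by rewrite hpsi.
rewrite {1}/aa.
have c1 : cosh (h + beta * (B + J)) = (u * v + u^-1 * v^-1) / 2.
  rewrite /cosh (_ : h + beta * (B + J) = beta * J + H); last by rewrite /H; ring.
  by rewrite (expRD (beta * J) H) opprD (expRD (- (beta * J)) (- H)) !expRN.
have c2 : cosh (h + beta * (B - J)) = (u^-1 * v + u * v^-1) / 2.
  rewrite /cosh (_ : h + beta * (B - J) = - (beta * J) + H); last by rewrite /H; ring.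
  by rewrite (expRD (- (beta * J)) H) opprD opprK (expRD (beta * J) (- H)) !expRN.
rewrite psiTT psiTF psiFT psiFF c1 c2.
by field; rewrite u0 v0 w0.
Qed.
End Alg.

Lemma lin_aux (R : realType) (x y z N b c : R) :
  - b + N * z <= x -> x <= b + N * z -> 0 <= z -> y <= c -> - y <= c ->
  - (b + c + z) <= (N - 1) * (y - z) + x - N * y <= b + c + z.
Proof.
move=> h1 h2 h3 h4 h5.
rewrite (_ : (N - 1) * (y - z) + x - N * y = (x - N * z) + (z - y)); last by ring.
move: h1 h2; move: (N * z) => t h1 h2.
apply/andP; split; lra.
Qed.

Section Main.
Variables (R : realType) (k : nat) (beta J B h : R).
Let f := f_theta (tanh (beta * J)) (h + beta * B).
Hypothesis hfix : h = k%:R * f.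
Hypothesis hk0 : (0 < k)%N.
Let K := beta * B + h + f.
Let S n := \sum_(s : {ffun Vn k n -> bool}) expR (K * spin (s (vroot k n))).

Lemma Zn_eq n : (0 < n)%N ->
  Zn k beta J B (fun _ => h) n = (aa beta J B h / 2) ^+ (#|Vn k n|.-1) * S n.
Proof.
move=> hn; rewrite /Zn /=.
under eq_bigr => s _ do rewrite (@energy R k n beta J B h f hfix hn s) expRD expR_sum.
have hdep : forall y : Vn k n, y != vroot k n ->
    (size (vword (par y)) < size (vword y))%N.
  move=> y yr; rewrite size_par // prednK // lt0n size_eq0 vword_eq0 //.
have := @tree_sum R (Vn k n) (vroot k n) (@par k n) (fun x => size (vword x)) hdep
   (psi beta J B h) (aa beta J B h) (@hpsi R beta J B h)
   (fun b => expR (K * spin b)) [set~ vroot k n].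
rewrite !inE eqxx => /(_ isT) e.
rewrite cardsC1 in e; rewrite -e; apply: eq_bigr => s _; congr (_ * _).
by apply: eq_bigl => y; rewrite !inE.
Qed.


Lemma S_bounds n : expR (- `|K|) *+ 2 ^ #|Vn k n| <= S n <= expR `|K| *+ 2 ^ #|Vn k n|.
Proof.
have hc : #|{ffun Vn k n -> bool}| = (2 ^ #|Vn k n|)%N by rewrite card_ffun card_bool.
have h1 : K <= `|K| := ler_norm K.
have h2 : - K <= `|K| by rewrite -normrN ler_norm.
apply/andP; split.
  rewrite -hc -sumr_const /S; apply: ler_sum => s _; rewrite ler_expR.
  by case: (s _); rewrite /spin ?mulr1 ?mulrN1; lra.
rewrite -hc -sumr_const /S; apply: ler_sum => s _; rewrite ler_expR.
by case: (s _); rewrite /spin ?mulr1 ?mulrN1; lra.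
Qed.

Let la := ln (aa beta J B h).
Let M := `|K| + `|la| + ln 2.

Lemma lnZ_bound n : (0 < n)%N ->
  `|ln (Zn k beta J B (fun _ => h) n) - #|Vn k n|%:R * la| <= M.
Proof.
move=> hn.
set N := #|Vn k n|.
have hN : (0 < N)%N := leq_trans (ltn0Sn n) (@card_V_ge k n hk0).
have ha := @aa_gt0 R beta J B h.
have ha2 : 0 < aa beta J B h / 2 by rewrite divr_gt0.
have /andP[Sl Su] := S_bounds n.
have eP : forall c : R, 0 < c -> ln (c *+ 2 ^ N) = ln c + N%:R * ln 2.
  move=> c hc; rewrite -[c *+ _]mulr_natr lnM ?posrE ?ltr0n ?expn_gt0 //.
  by rewrite natrX lnXn // mulr_natl.
have hSpos : 0 < S n by apply: lt_le_trans Sl; rewrite pmulrn_rgt0 ?expn_gt0 ?expR_gt0.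
have lSl : - `|K| + N%:R * ln 2 <= ln (S n).
  by rewrite -[X in X + _]expRK -eP ?expR_gt0 // ler_ln // posrE pmulrn_rgt0 ?expn_gt0 ?expR_gt0.
have lSu : ln (S n) <= `|K| + N%:R * ln 2.
  by rewrite -[X in _ <= X + _]expRK -eP ?expR_gt0 // ler_ln // posrE pmulrn_rgt0 ?expn_gt0 ?expR_gt0.
have eZ : ln (Zn k beta J B (fun _ => h) n) = (N%:R - 1) * (la - ln 2) + ln (S n).
  rewrite Zn_eq // lnM ?posrE ?exprn_gt0 // lnXn // ln_div ?posrE //.
  have eN : N%:R - 1 = N.-1%:R :> R.
    by rewrite -{1}(prednK hN) -addn1 natrD addrK.
  by rewrite eN mulr_natl.
have l2 : 0 <= ln 2 :> R by rewrite ln_ge0 // ler1n.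
have n1 : la <= `|la| := ler_norm la.
have n2 : - la <= `|la| by rewrite -normrN ler_norm.
rewrite eZ ler_norml /M.
exact: lin_aux.
Qed.


Local Open Scope classical_set_scope.
Local Open Scope ring_scope.
Lemma final (hb : 0 < beta) :
  (fun n : nat => - (ln (Zn k beta J B (fun _ => h) n) / (beta * #|{: Vn k n}|%:R)))
    @ \oo --> - (ln (4 * cosh (h + beta * (B + J)) * cosh (h + beta * (B - J))) / (2 * beta)).
Proof.
set L := - (_ / (2 * beta)).
have ha := @aa_gt0 R beta J B h.
have eL : L = - (la / beta).
  rewrite /L -aa_sq lnXn // -/la -mulr_natr; field.
  by rewrite gt_eqF.
pose c : R := M / beta.
have hb0 : beta != 0 by rewrite gt_eqF.
have h0 : forall L' : R, (fun n : nat => L' - c * harmonic n) @ \oo --> L' - 0.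
  move=> L'; apply: cvgB; first exact: cvg_cst.
  by rewrite -(mulr0 c); exact: (@cvgMl_tmp _ _ _ _ _ c _ (@cvg_harmonic R)).
have h0' : forall L' : R, (fun n : nat => L' + c * harmonic n) @ \oo --> L' + 0.
  move=> L'; apply: cvgD; first exact: cvg_cst.
  by rewrite -(mulr0 c); exact: (@cvgMl_tmp _ _ _ _ _ c _ (@cvg_harmonic R)).
apply: (@squeeze_cvgr _ _ _ _ (fun n => L - c * harmonic n) (fun n => L + c * harmonic n)).
- near=> n.
  have hn : (0 < n)%N by near: n; exists 1%N => // m.
  rewrite -ler_distl.
  have hN : (n.+1 <= #|Vn k n|)%N := @card_V_ge k n hk0.
  have hN0 : 0 < #|Vn k n|%:R :> R by rewrite ltr0n (leq_trans _ hN).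
  set D := ln (Zn k beta J B (fun _ => h) n) - #|Vn k n|%:R * la.
  have -> : - (ln (Zn k beta J B (fun _ => h) n) / (beta * #|{: Vn k n}|%:R)) - L
          = - D / (beta * #|Vn k n|%:R).
    rewrite eL /D; field; by rewrite hb0 gt_eqF.
  have hD : `|D| <= M := lnZ_bound hn.
  have hbN : 0 <= beta * #|Vn k n|%:R by rewrite mulr_ge0 // ltW.
  rewrite normrM normrN normfV (ger0_norm hbN) /c.
  rewrite (_ : M / beta * n.+1%:R^-1 = M * (beta * n.+1%:R)^-1); last first.
    by rewrite invfM mulrA.
  apply: ler_pM => //; first by rewrite invr_ge0.
  rewrite lef_pV2 ?posrE ?mulr_gt0 ?ltr0n ?(leq_trans _ hN) //.
  by rewrite ler_pM2l // ler_nat.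
- have h1 := h0 L.
  by rewrite subr0 in h1.
- have h1 := h0' L.
  by rewrite addr0 in h1.
Unshelve. all: by end_near.
Qed.
End Main.

Unset Implicit Arguments.
Local Open Scope classical_set_scope.
Local Open Scope ring_scope.

Theorem proposition2 (R : realType) (k : nat) (beta J B h : R) :
  (2 <= k)%N -> 0 < beta ->
  h = k%:R * f_theta (tanh (beta * J)) (h + beta * B) ->
  (fun n : nat => - (ln (Zn k beta J B (fun _ => h) n) / (beta * #|{: Vn k n}|%:R)))
    @ \oo --> - (ln (4 * cosh (h + beta * (B + J)) * cosh (h + beta * (B - J))) / (2 * beta)).
Proof.
move=> hk2 hb hfix.
have hk0 : (0 < k)%N by apply: leq_trans hk2.
exact: (@final R k beta J B h hfix hk0 hb).
Qed.
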